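(* Let $n\ge 2$ be even. Then each of the $n$ cusps of $F_n$ lying above $\infty$ (the points $(X:Y:0)$ of $F_n$) is ramified in the cover $C_n\to F_n$ with ramification index exactly $2$. Equivalently, every point of $C_n$ above $\infty$ has ramification index $2n$ in the cover $C_n\to C_n/H_n\cong\mathbb{P}^1$.
   Context: $\Delta=\langle a,b\rangle\subset\mathrm{SL}(2,\mathbb{Z})$ with $a=\begin{pmatrix}1&2\\0&1\end{pmatrix}$, $b=\begin{pmatrix}1&0\\2&1\end{pmatrix}$; $H_n$ is the Heisenberg group of upper unitriangular $3\times3$ matrices over $\mathbb{Z}/n\mathbb{Z}$ generated by $a_H=I+E_{12}$, $b_H=I+E_{23}$, with center $Z_n$. $\phi:\Delta\to H_n$, $a\mapsto a_H$, $b\mapsto b_H$; $\psi:\Delta\to(\mathbb{Z}/n\mathbb{Z})^2$, $a\mapsto(1,0)$, $b\mapsto(0,1)$. $C_n$ (Heisenberg curve) and $F_n$ (Fermat curve) are the compactifications by cusps of $\ker\phi\backslash\mathbb{H}$ and $\ker\psi\backslash\mathbb{H}$; $C_n\to F_n$ is Galois with group $Z_n$ and $C_n\to\mathbb{P}^1=\Delta\backslash\mathbb{H}\cup\{\text{cusps}\}$ is Galois with group $H_n$. $F_n$ is identified with the projective curve $X^n+Y^n=Z^n$, the map $F_n\to\mathbb{P}^1$ being $(X:Y:Z)\mapsto(X/Z)^n$. *)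

(* Defs.v *)
From HB Require Import structures.
From mathcomp Require Import all_boot all_order all_algebra.
Set Implicit Arguments. Unset Strict Implicit. Unset Printing Implicit Defensive.
Import GRing.Theory.
Local Open Scope ring_scope.

Definition mA  : 'M[int]_2 := 1%:M + delta_mx ord0 ord_max *+ 2.
Definition mAi : 'M[int]_2 := 1%:M - delta_mx ord0 ord_max *+ 2.
Definition mB  : 'M[int]_2 := 1%:M + delta_mx ord_max ord0 *+ 2.
Definition mBi : 'M[int]_2 := 1%:M - delta_mx ord_max ord0 *+ 2.

(* A word in the free group on {a, b}: a letter is (is_b, is_inverse). *)
Definition word := seq (bool * bool).

Definition letterD (l : bool * bool) : 'M[int]_2 :=
  match l with
  | (false, false) => mA | (false, true) => mAi
  | (true, false) => mB  | (true, true) => mBi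
  end.

(* Every element of Delta = <a,b> is evalD w for some word w. *)
Definition evalD (w : word) : 'M[int]_2 :=
  foldr (fun l M => letterD l *m M) 1%:M w.

Definition aH  (n : nat) : 'M['Z_n]_3 := 1%:M + delta_mx 0 1.
Definition aHi (n : nat) : 'M['Z_n]_3 := 1%:M - delta_mx 0 1.
Definition bH  (n : nat) : 'M['Z_n]_3 := 1%:M + delta_mx 1 2.
Definition bHi (n : nat) : 'M['Z_n]_3 := 1%:M - delta_mx 1 2.

Definition letterH (n : nat) (l : bool * bool) : 'M['Z_n]_3 :=
  match l with
  | (false, false) => aH n | (false, true) => aHi n
  | (true, false) => bH n  | (true, true) => bHi n
  end.

(* phi : Delta -> H_n, a |-> a_H, b |-> b_H (Delta is free on a, b). *)
Definition phiw (n : nat) (w : word) : 'M['Z_n]_3 :=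
  foldr (fun l M => letterH n l *m M) 1%:M w.

Definition letterP (n : nat) (l : bool * bool) : 'Z_n * 'Z_n :=
  match l with
  | (false, false) => (1, 0) | (false, true) => (-1, 0)
  | (true, false) => (0, 1)  | (true, true) => (0, -1)
  end.

Definition psiw (n : nat) (w : word) : 'Z_n * 'Z_n :=
  foldr (fun l p => ((letterP n l).1 + p.1, (letterP n l).2 + p.2)) (0, 0) w.

(* Points of P^1(Q) represented by nonzero integer column vectors (x : y);
   g fixes the cusp [v] iff g v is proportional to v. *)
Definition fixes (g : 'M[int]_2) (v : 'cV[int]_2) : bool :=
  (g *m v) ord0 ord0 * v ord_max ord0 == (g *m v) ord_max ord0 * v ord0 ord0.

(* The cusp of Delta\H* sent to infinity by the identification with P^1
   (x = X/Z, lambda = x^n): the cusp 1 = (1 : 1). *)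
Definition cusp_inf : 'cV[int]_2 := \col_(i < 2) 1.

Definition has_card (T : finType) (P : T -> Prop) (k : nat) : Prop :=
  exists S : {set T}, (forall x, x \in S <-> P x) /\ #|S| = k.

(* Ramification index at the cusp s of C_n over P^1 = Delta\H*:
   [Delta_s : (ker phi)_s] = #|phi(Delta_s)|. *)
Definition ram_C_P1 (n : nat) (s : 'cV[int]_2) (k : nat) : Prop :=
  has_card (fun x : 'M['Z_n]_3 => exists w : word, fixes (evalD w) s /\ phiw n w = x) k.

(* Ramification index at the cusp s of C_n over F_n:
   [(ker psi)_s : (ker phi)_s] = #|phi((ker psi)_s)|. *)
Definition ram_C_F (n : nat) (s : 'cV[int]_2) (k : nat) : Prop :=
  has_card (fun x : 'M['Z_n]_3 =>
    exists w : word, fixes (evalD w) s /\ psiw n w = (0, 0) /\ phiw n w = x) k.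

(* Main.v *)
Require Import Defs.
From HB Require Import structures.
From mathcomp Require Import all_boot all_order all_algebra.
Local Open Scope ring_scope.
From mathcomp Require Import zify ring lra.
Set Implicit Arguments. Unset Strict Implicit. Unset Printing Implicit Defensive.
Import GRing.Theory Num.Theory.


Definition linv (l : bool * bool) : bool * bool := (l.1, ~~ l.2).
Definition winv (w : word) : word := rev (map linv w).

Definition actP (l : bool * bool) (p : int * int) : int * int :=
  match l with
  | (false, false) => (p.1 + 2 * p.2, p.2)
  | (false, true) => (p.1 - 2 * p.2, p.2)
  | (true, false) => (p.1, 2 * p.1 + p.2)
  | (true, true) => (p.1, p.2 - 2 * p.1)
  end.
Definition actW (w : word) (p : int * int) : int * int := foldr actP p w.

Definition colv (p : int * int) : 'cV[int]_2 :=
  \col_(i < 2) (if i == ord0 then p.1 else p.2).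

Lemma letterD_act l p : letterD l *m colv p = colv (actP l p).
Proof.
apply/matrixP => i j; rewrite !mxE big_ord_recl big_ord1 !mxE.
case: l => [[] []]; case: p => x y /=;
case: i => [[|[|k]] hi] //=; rewrite /mA /mAi /mB /mBi !mxE /=.
all: lia.
Qed.

Lemma actW_cat u v p : actW (u ++ v) p = actW u (actW v p).
Proof. by rewrite /actW foldr_cat. Qed.

Lemma evalD_cat u v : evalD (u ++ v) = evalD u *m evalD v.
Proof. elim: u => [|l u IH] /=; first by rewrite mul1mx. by rewrite IH mulmxA. Qed.

Lemma evalD_act w p : evalD w *m colv p = colv (actW w p).
Proof. elim: w => [|l w IH] /=; first by rewrite mul1mx. by rewrite -mulmxA IH letterD_act. Qed.

Lemma phiw_cat n u v : phiw n (u ++ v) = phiw n u *m phiw n v.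
Proof. elim: u => [|l u IH] /=; first by rewrite mul1mx. by rewrite IH mulmxA. Qed.

Lemma psiw_cat n u v : psiw n (u ++ v) =
  ((psiw n u).1 + (psiw n v).1, (psiw n u).2 + (psiw n v).2).
Proof. elim: u => [|l u IH] /=; first by rewrite !add0r; case: (psiw n v).
by rewrite IH /= !addrA. Qed.

Lemma linvK : involutive linv.
Proof. by case=> [b c]; rewrite /linv /= negbK. Qed.

Lemma actP_linv l p : actP (linv l) (actP l p) = p.
Proof. case: l => [[] []]; case: p => x y /=; congr pair; lia. Qed.

Lemma letterH_linv n l : letterH n l *m letterH n (linv l) = 1%:M.
Proof.
case: l => [[] []]; rewrite /= /aH /aHi /bH /bHi;
rewrite ?mulmxDl ?mulmxBl ?mulmxDr ?mulmxBr ?mul1mx ?mulmx1;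
by rewrite ?mulNmx ?mulmxN mul_delta_mx_0 // ?oppr0 ?addr0 ?addrK ?subrK.
Qed.

Lemma letterP_linv1 n l : (letterP n l).1 + (letterP n (linv l)).1 = 0.
Proof. by case: l => [[] []]; rewrite /= ?addrN ?addNr ?addr0. Qed.
Lemma letterP_linv2 n l : (letterP n l).2 + (letterP n (linv l)).2 = 0.
Proof. by case: l => [[] []]; rewrite /= ?addrN ?addNr ?addr0. Qed.

Fixpoint redb (w : word) : bool :=
  match w with
  | l1 :: ((l2 :: _) as w') => (l2 != linv l1) && redb w'
  | _ => true
  end.

Lemma notred w : ~~ redb w -> exists u l v, w = u ++ l :: linv l :: v.
Proof.
elim: w => [|l1 w IH] //=; case: w IH => [|l2 w''] IH //.
case: eqP => [->|_] /= H; first by exists [::], l1, w''.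
have [u [l [v ->]]] := IH H.
by exists (l1 :: u), l, v.
Qed.

Lemma actW_cancel u l v p : actW (u ++ l :: linv l :: v) p = actW (u ++ v) p.
Proof.
rewrite !actW_cat /=; congr actW.
by rewrite -{1}(linvK l) actP_linv.
Qed.

Lemma phiw_cancel n u l v : phiw n (u ++ l :: linv l :: v) = phiw n (u ++ v).
Proof. by rewrite !phiw_cat /= [letterH n l *m _]mulmxA letterH_linv mul1mx. Qed.

Lemma psiw_cancel n u l v : psiw n (u ++ l :: linv l :: v) = psiw n (u ++ v).
Proof.
have E : forall l' v', psiw n (l' :: v') = ((letterP n l').1 + (psiw n v').1,
   (letterP n l').2 + (psiw n v').2) by [].
rewrite !psiw_cat !E; cbn [fst snd].
by rewrite !addrA -[_ + (letterP n l).1 + _]addrA letterP_linv1 -[_ + (letterP n l).2 + _]addrA letterP_linv2 !addr0.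
Qed.

Definition st (l : bool * bool) (p : int * int) : Prop :=
  let x := p.1 in let y := p.2 in
  match l with
  | (false, false) => (0 < y /\ y < x) \/ (x < y /\ y < 0)
  | (false, true) => (0 < x /\ y < 0 /\ - y < x) \/ (x < 0 /\ 0 < y /\ y < - x)
  | (true, false) => (0 < x /\ x < y) \/ (y < x /\ x < 0)
  | (true, true) => (0 < x /\ y < 0 /\ x < - y) \/ (x < 0 /\ 0 < y /\ - x < y)
  end.

Definition v0 (l : bool * bool) : int * int := if l.1 then (1, 0) else (0, 1).

Lemma st_step l l2 p : l2 <> linv l -> st l2 p -> st l (actP l p).
Proof.
case: l => [[] []]; case: l2 => [[] []] H; rewrite /st /=; try lia;
by exfalso; apply: H.
Qed.

Lemma st_base l : st l (actP l (v0 l)).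
Proof. case: l => [[] []]; rewrite /st /=; lia. Qed.

Lemma st_v0 l l' : ~ st l (v0 l').
Proof. case: l => [[] []]; case: l' => [[] []]; rewrite /st /=; lia. Qed.

Lemma pingpong w l : redb (l :: w) -> st l (actW (l :: w) (v0 (last l w))).
Proof.
elim: w l => [|l2 w IH] l /=; first by move=> _; apply: st_base.
case/andP=> /eqP H1 H2; apply: st_step H1 _.
exact: (IH l2 H2).
Qed.

Lemma free_k n k : forall w, (size w <= k)%N -> (forall p, actW w p = p) ->
  phiw n w = 1%:M /\ psiw n w = (0, 0).
Proof.
elim: k => [|k IH] w.
  by case: w.
move=> hs ha; case hr: (redb w).
  case: w hr hs ha => [|l w] // hr _ ha.
  exfalso; have := pingpong hr; rewrite ha; apply: st_v0.
have [u [l [v E]]] := notred (negbT hr).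
have hs' : (size (u ++ v) <= k)%N.
  by move: hs; rewrite E !size_cat /=; lia.
have ha' : forall p, actW (u ++ v) p = p by move=> p; rewrite -(actW_cancel u l) -E.
by rewrite E phiw_cancel psiw_cancel; apply: IH.
Qed.

Lemma free n w : (forall p, actW w p = p) -> phiw n w = 1%:M /\ psiw n w = (0, 0).
Proof. exact: (@free_k n (size w) w (leqnn _)). Qed.

Lemma int_unit (a c : int) : a * c = 1 -> a = 1 \/ a = -1.
Proof.
move=> h; have h' : c * a = 1 by rewrite mulrC.
have := @intUnitRing.unitzPl a c h'.
by rewrite qualifE => /orP [/eqP|/eqP]; [left|right].
Qed.

Lemma winv_cons l w : winv (l :: w) = winv w ++ [:: linv l].
Proof. by rewrite /winv /= rev_cons cats1. Qed.

Lemma winvK : involutive winv.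
Proof. by move=> w; rewrite /winv map_rev revK -map_comp (eq_map linvK) map_id. Qed.

Lemma actW_winvL w p : actW (winv w) (actW w p) = p.
Proof.
elim: w p => [|l w IH] p //.
have E1 : forall q, actW [:: linv l] q = actP (linv l) q by [].
have E2 : actW (l :: w) p = actP l (actW w p) by [].
by rewrite winv_cons actW_cat E1 E2 actP_linv IH.
Qed.

Lemma actW_winvR w p : actW w (actW (winv w) p) = p.
Proof. by rewrite -{1}(winvK w) actW_winvL. Qed.

Lemma phiw_winvL n w : phiw n (winv w) *m phiw n w = 1%:M.
Proof.
elim: w => [|l w IH] /=; first by rewrite mul1mx.
rewrite winv_cons phiw_cat /= mulmx1 -mulmxA [letterH n (linv l) *m _]mulmxA.
by rewrite -{2}(linvK l) letterH_linv mul1mx IH.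
Qed.

Lemma phiw_winvR n w : phiw n w *m phiw n (winv w) = 1%:M.
Proof. by rewrite -{1}(winvK w) phiw_winvL. Qed.

Lemma psiw_winv n w : psiw n (winv w) = (- (psiw n w).1, - (psiw n w).2).
Proof.
elim: w => [|l w IH]; first by rewrite /= oppr0.
have E : forall l' v', psiw n (l' :: v') = ((letterP n l').1 + (psiw n v').1,
   (letterP n l').2 + (psiw n v').2) by [].
rewrite winv_cons psiw_cat IH E; cbn [fst snd].
have E0 : psiw n [:: linv l] = ((letterP n (linv l)).1, (letterP n (linv l)).2).
  by rewrite E /= !addr0.
have E00 : psiw n [::] = (0,0) by [].
rewrite E00 E; cbn [fst snd].
have h1 := letterP_linv1 n l; have h2 := letterP_linv2 n l.
move/eqP: h1; rewrite addr_eq0 => /eqP ->.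
move/eqP: h2; rewrite addr_eq0 => /eqP ->.
congr pair; ring.
Qed.

Lemma free_eq n w1 w2 : (forall p, actW w1 p = actW w2 p) ->
  phiw n w1 = phiw n w2 /\ psiw n w1 = psiw n w2.
Proof.
move=> h.
have ha : forall p, actW (w1 ++ winv w2) p = p by move=> p; rewrite actW_cat h actW_winvR.
have [h1 h2] := @free n (w1 ++ winv w2) ha.
split.
  by rewrite -[phiw n w1]mulmx1 -(phiw_winvL n w2) mulmxA -phiw_cat h1 mul1mx.
move: h2; rewrite psiw_cat psiw_winv; case: (psiw n w1) => a b; case: (psiw n w2) => c d /=.
move=> H; move: (congr1 fst H) (congr1 snd H); cbn [fst snd].
move/eqP; rewrite subr_eq0 => /eqP ->; move/eqP; rewrite subr_eq0 => /eqP ->.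
done.
Qed.

Lemma actW_lin w x y : actW w (x, y) =
  (x * (actW w (1,0)).1 + y * (actW w (0,1)).1, x * (actW w (1,0)).2 + y * (actW w (0,1)).2).
Proof.
elim: w => [|l w IH] /=; first by congr pair; ring.
rewrite IH; case: (actW w (1,0)) => a c; case: (actW w (0,1)) => b d /=.
by case: l => [[] []] /=; congr pair; ring.
Qed.

Lemma inv_w w : let a := (actW w (1,0)).1 in let c := (actW w (1,0)).2 in
  let b := (actW w (0,1)).1 in let d := (actW w (0,1)).2 in
  a * d - b * c = 1 /\ (a %% 4 = 1)%Z /\ (d %% 4 = 1)%Z /\ (b %% 2 = 0)%Z /\ (c %% 2 = 0)%Z.
Proof.
elim: w => [|l w IH] /=; first by [].
move: IH; case: (actW w (1,0)) => a c; case: (actW w (0,1)) => b d /=.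
by case: l => [[] []] /=; nia.
Qed.

Lemma sgn_cases (j : nat) :
  ((-1)^+j = 1 :> int /\ exists t : nat, j = (2*t)%N) \/
  ((-1)^+j = -1 :> int /\ exists t : nat, j = (2*t+1)%N).
Proof.
rewrite -signr_odd; have := odd_double_half j; case: (odd j) => /= h.
  by right; split; [rewrite expr1|exists j./2; lia].
by left; split; [rewrite expr0|exists j./2; lia].
Qed.

Definition sg (j : nat) : int := (-1) ^+ j.

Lemma arith (a b c d : int) : a * d - b * c = 1 -> (a %% 4 = 1)%Z -> (d %% 4 = 1)%Z ->
  (b %% 2 = 0)%Z -> (c %% 2 = 0)%Z -> a + b = c + d ->
  exists j : nat,
   (a = sg j * (1 - 2 * j%:Z) /\ b = sg j * (2 * j%:Z) /\ c = sg j * (- 2 * j%:Z) /\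
      d = sg j * (1 + 2 * j%:Z)) \/
   (a = sg j * (1 + 2 * j%:Z) /\ b = sg j * (- 2 * j%:Z) /\ c = sg j * (2 * j%:Z) /\
      d = sg j * (1 - 2 * j%:Z)).
Proof.
move=> hdet ha hd hb hc hs.
have hc' : c = a + b - d by lia.
subst c.
have hu : (a + b) * (d - b) = 1 by lia.
have [k hk] : exists k, b = 2 * k by exists (b %/ 2)%Z; lia.
have [hl|hl] := int_unit hu.
- case: k hk => j hj.
  + exists j; left; rewrite /sg.
    have [[hs' [t ht]]|[hs' [t ht]]] := sgn_cases j; rewrite hs'; subst j; lia.
  + exists j.+1; right; rewrite /sg; rewrite NegzE in hj.
    have [[hs' [t ht]]|[hs' [t ht]]] := sgn_cases j.+1; rewrite hs'; rewrite ht in hj *; lia.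
- case: k hk => j hj.
  + exists j; right; rewrite /sg.
    have [[hs' [t ht]]|[hs' [t ht]]] := sgn_cases j; rewrite hs'; subst j; lia.
  + exists j.+1; left; rewrite /sg; rewrite NegzE in hj.
    have [[hs' [t ht]]|[hs' [t ht]]] := sgn_cases j.+1; rewrite hs'; rewrite ht in hj *; lia.
Qed.

Definition pw0 : word := [:: (true, false); (false, true)].
Definition pw (j : nat) : word := iter j (cat pw0) [::].
Definition pwi (j : nat) : word := iter j (cat (winv pw0)) [::].

Lemma pw_act j x y : actW (pw j) (x, y) =
  (sg j * ((1 - 2 * j%:Z) * x + 2 * j%:Z * y), sg j * (- 2 * j%:Z * x + (1 + 2 * j%:Z) * y)).
Proof.
elim: j => [|j IH]; first by rewrite /sg /=; congr pair; ring.
rewrite /pw iterS -/(pw j) actW_cat IH /sg exprS intS /=; congr pair; ring.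
Qed.

Lemma pwi_act j x y : actW (pwi j) (x, y) =
  (sg j * ((1 + 2 * j%:Z) * x - 2 * j%:Z * y), sg j * (2 * j%:Z * x + (1 - 2 * j%:Z) * y)).
Proof.
elim: j => [|j IH]; first by rewrite /sg /=; congr pair; ring.
rewrite /pwi iterS -/(pwi j) actW_cat IH /sg exprS intS /=; congr pair; ring.
Qed.

Lemma stab w : (actW w (1,1)).1 = (actW w (1,1)).2 ->
  (exists j, forall p, actW w p = actW (pw j) p) \/
  (exists j, forall p, actW w p = actW (pwi j) p).
Proof.
have := inv_w w; rewrite [actW w (1,1)]actW_lin /=.
case E1: (actW w (1,0)) => [a c]; case E2: (actW w (0,1)) => [b d] /=.
move=> [h1 [h2 [h3 [h4 h5]]]] h6.
have h6' : a + b = c + d by lia.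
have [j [[ea [eb [ec ed]]]|[ea [eb [ec ed]]]]] := arith h1 h2 h3 h4 h5 h6'.
  left; exists j => [[x y]]; rewrite actW_lin pw_act E1 E2 /= ea eb ec ed.
  by congr pair; ring.
right; exists j => [[x y]]; rewrite actW_lin pwi_act E1 E2 /= ea eb ec ed.
by congr pair; ring.
Qed.


Definition NH (n : nat) : 'M['Z_n]_3 := delta_mx 1 2 - delta_mx 0 1.
Definition qH (n : nat) : 'M['Z_n]_3 := phiw n pw0.

Lemma qH_eq n : qH n = 1 + NH n.
Proof.
rewrite /qH /NH /= /bH /aHi mulmx1 mulmxDl mulmxBr !mul1mx mulmxBr mulmx1.
by rewrite mul_delta_mx_0 // subr0 addrAC -addrA.
Qed.

Lemma NN n : NH n * NH n = - delta_mx 0 2.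
Proof.
rewrite /NH -mulmxE mulmxBl !mulmxBr !mul_delta_mx mul_delta_mx_0 //.
by rewrite mul_delta_mx_0 // mul_delta_mx_0 // !subr0 sub0r.
Qed.

Lemma NNN n : (NH n * NH n) * NH n = 0.
Proof.
rewrite NN /NH -mulmxE mulNmx mulmxBr !mul_delta_mx_0 // subr0 oppr0 //.
Qed.

Lemma pow_nil (R : ringType) (N : R) j : N * N * N = 0 ->
  (1 + N) ^+ j = 1 + N *+ j + (N * N) *+ 'C(j, 2).
Proof.
move=> h3; elim: j => [|j IH]; first by rewrite expr0 !mulr0n !addr0.
rewrite exprSr IH !mulrDl !mulrDr !mul1r !mulr1 !mulrnAl h3 mul0rn addr0.
rewrite binS bin1 mulrnDr mulrS.
by rewrite !addrA [RHS]addrAC.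
Qed.

Lemma qH_pow n j : qH n ^+ j = 1 + NH n *+ j + (NH n * NH n) *+ 'C(j, 2).
Proof. by rewrite qH_eq pow_nil // NNN. Qed.


Lemma qH01 n j : (qH n ^+ j) 0 1 = - (j%:R).
Proof.
rewrite qH_pow NN /NH !mxE !mulmxnE !mxE /=.
by rewrite sub0r oppr0 mul0rn add0r addr0 mulNrn.
Qed.
Lemma qH02 n j : (qH n ^+ j) 0 2 = - ('C(j,2)%:R).
Proof.
rewrite qH_pow NN /NH !mxE !mulmxnE !mxE /=.
by rewrite subrr mul0rn add0r add0r mulNrn.
Qed.

Lemma psiw_cons n l v : psiw n (l :: v) = ((letterP n l).1 + (psiw n v).1,
   (letterP n l).2 + (psiw n v).2).
Proof. by []. Qed.

Lemma psiw_pw n j : psiw n (pw j) = (- j%:R, j%:R).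
Proof.
elim: j => [|j IH]; first by rewrite /= oppr0.
rewrite /pw iterS -/(pw j) psiw_cat IH /pw0 !psiw_cons; cbn [letterP fst snd psiw foldr].
by congr pair; rewrite mulrS; ring.
Qed.

Lemma psiw_pwi n j : psiw n (pwi j) = (j%:R, - j%:R).
Proof.
elim: j => [|j IH]; first by rewrite /= oppr0.
rewrite /pwi iterS -/(pwi j) psiw_cat IH /winv /pw0 /=.
idtac.
by congr pair; rewrite mulrS; ring.
Qed.

Lemma phiw_pw n j : phiw n (pw j) = qH n ^+ j.
Proof.
elim: j => [|j IH]; first by rewrite expr0.
by rewrite /pw iterS -/(pw j) phiw_cat IH exprS mulmxE.
Qed.

Definition qHi (n : nat) : 'M['Z_n]_3 := phiw n (winv pw0).

Lemma phiw_pwi n j : phiw n (pwi j) = qHi n ^+ j.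
Proof.
elim: j => [|j IH]; first by rewrite expr0.
by rewrite /pwi iterS -/(pwi j) phiw_cat IH exprS mulmxE.
Qed.

Lemma natZ0 n k : (1 < n)%N -> ((k%:R : 'Z_n) == 0) = (n %| k)%N.
Proof. by move=> hn; rewrite -val_eqE /= val_Zp_nat. Qed.

Lemma natZeq n i j : (1 < n)%N -> ((i%:R : 'Z_n) == j%:R) = (i == j %[mod n])%N.
Proof. by move=> hn; rewrite -val_eqE /= !val_Zp_nat. Qed.

Lemma bin2_double m : ('C(m, 2) * 2 = m * m.-1)%N.
Proof. elim: m => [|m IH] //; rewrite binS bin1; case: m IH => [|m] IH //=; nia. Qed.

Lemma bin2_add i m : 'C(i + m, 2) = ('C(i, 2) + i * m + 'C(m, 2))%N.
Proof. elim: i => [|i IH]; first by rewrite add0n bin0n. 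
by rewrite addSn binS bin1 IH binS bin1; nia. Qed.


Lemma mulrn_Z0 n (A : 'M['Z_n]_3) k : (1 < n)%N -> (n %| k)%N -> A *+ k = 0.
Proof. by move=> hn hk; rewrite -scaler_nat; move: hk; rewrite -natZ0 // => /eqP ->; rewrite scale0r. Qed.

Lemma bin2_2n n : 'C(2 * n, 2) = (n * (2 * n - 1))%N.
Proof. rewrite mul2n -addnn bin2_add; have := bin2_double n; nia. Qed.

Lemma qH_2n n : (1 < n)%N -> qH n ^+ (2 * n) = 1.
Proof.
move=> hn; rewrite qH_pow (mulrn_Z0 _ hn) ?dvdn_mull // (mulrn_Z0 _ hn).
  by rewrite !addr0.
by rewrite bin2_2n dvdn_mulr.
Qed.

Lemma qHi_eq n : (1 < n)%N -> qHi n = qH n ^+ (2 * n).-1.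
Proof.
move=> hn.
have h1 : qHi n * qH n = 1 by rewrite -mulmxE /qHi /qH phiw_winvL.
have h2 : (2 * n = ((2 * n).-1).+1)%N by lia.
by rewrite -[qHi n]mulr1 -(qH_2n hn) h2 exprS mulrA h1 mul1r.
Qed.

Lemma not_dvd_bin2 n : (1 < n)%N -> ~~ odd n -> ~~ (n %| 'C(n, 2))%N.
Proof.
move=> hn he; apply/negP => /dvdnP [t ht].
have := bin2_double n; rewrite ht => h.
have h' : (n * (t * 2) = n * n.-1)%N by rewrite -h; ring.
move/eqP: h'; rewrite eqn_pmul2l; last by lia.
move/eqP => h2.
have := odd_double_half n; rewrite (negbTE he) /= add0n => h3.
lia.
Qed.

Lemma qH_inj n i j : (1 < n)%N -> ~~ odd n -> (i < 2 * n)%N -> (j < 2 * n)%N ->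
  qH n ^+ i = qH n ^+ j -> i = j.
Proof.
move=> hn he.
wlog hij : i j / (i <= j)%N.
  move=> H hi hj E; case: (leqP i j) => h; first exact: H.
  by apply/esym; apply: H (ltnW h) hj hi (esym E).
move=> hi hj E.
have e1 := congr1 (fun M : 'M['Z_n]_3 => M 0 1) E; rewrite /= !qH01 in e1.
have e2 := congr1 (fun M : 'M['Z_n]_3 => M 0 2) E; rewrite /= !qH02 in e2.
move/oppr_inj/eqP: e1; rewrite natZeq // eq_sym eqn_mod_dvd // => /dvdnP [t ht].
have [t0|t1] : (t = 0 \/ t = 1)%N by nia.
  by subst t; lia.
subst t; have hj' : j = (i + n)%N by lia.
move/oppr_inj/eqP: e2; rewrite natZeq // hj' bin2_add -addnA.
rewrite -{1}[('C(i,2))%N]addn0 eqn_modDl => /eqP h.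
have : (n %| 'C(n, 2))%N.
  by move: h; rewrite modnMDl mod0n => h; rewrite /dvdn; apply/eqP; rewrite -h.
by move=> hd; exfalso; move: (not_dvd_bin2 hn he); rewrite hd.
Qed.


Lemma cusp_colv : cusp_inf = colv (1, 1).
Proof. by apply/matrixP => i j; rewrite !mxE; case: ifP. Qed.

Lemma cross_inv u P Q : (actW u P).1 * (actW u Q).2 - (actW u P).2 * (actW u Q).1 =
  P.1 * Q.2 - P.2 * Q.1.
Proof.
case: P => p1 p2; case: Q => q1 q2.
rewrite (actW_lin u p1 p2) (actW_lin u q1 q2); have [hd _] := inv_w u; move: hd.
case: (actW u (1,0)) => a c; case: (actW u (0,1)) => b d /= hd.
transitivity ((a * d - b * c) * (p1 * q2 - p2 * q1)); first by ring.
by rewrite hd mul1r.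
Qed.

Lemma fixes_iff w0 w : fixes (evalD w) (evalD w0 *m cusp_inf) <->
  (actW (winv w0 ++ w ++ w0) (1,1)).1 = (actW (winv w0 ++ w ++ w0) (1,1)).2.
Proof.
rewrite /fixes cusp_colv !evalD_act !mxE /=.
have := cross_inv (winv w0) (actW w (actW w0 (1,1))) (actW w0 (1,1)).
rewrite actW_winvL -!actW_cat /= !mulr1 => h.
rewrite -catA in h.
split => [/eqP h'|h']; last apply/eqP; lia.
Qed.

Lemma char_fix n w0 w : (1 < n)%N -> fixes (evalD w) (evalD w0 *m cusp_inf) ->
  exists k, phiw n w = phiw n w0 *m qH n ^+ k *m phiw n (winv w0) /\
    (psiw n w = (0,0) -> (n %| k)%N).
Proof.
move=> hn /fixes_iff /stab.
have key : forall W, phiw n (winv w0 ++ w ++ w0) = W ->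
    phiw n w = phiw n w0 *m W *m phiw n (winv w0).
  move=> W <-; rewrite !phiw_cat !mulmxA phiw_winvR mul1mx -mulmxA phiw_winvR.
  by rewrite mulmx1.
have keyp : psiw n w = (0,0) -> psiw n (winv w0 ++ w ++ w0) = (0,0).
  move=> h; rewrite !psiw_cat psiw_winv h /=.
  by congr pair; rewrite add0r addNr.
case=> [[j hj]|[j hj]]; have [e1 e2] := free_eq n hj.
  exists j; split; first by apply: key; rewrite e1 phiw_pw.
  move/keyp; rewrite e2 psiw_pw => h.
  by have := congr1 snd h; cbn [snd] => /eqP; rewrite natZ0.
exists ((2 * n).-1 * j)%N; split.
  by apply: key; rewrite e1 phiw_pwi qHi_eq // exprM.
move/keyp; rewrite e2 psiw_pwi => h.
have := congr1 fst h; cbn [fst] => /eqP; rewrite natZ0 // => hd.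
by apply: dvdn_mull.
Qed.


Lemma conj_inj n w0 (A B : 'M['Z_n]_3) :
  phiw n w0 *m A *m phiw n (winv w0) = phiw n w0 *m B *m phiw n (winv w0) -> A = B.
Proof.
move=> h.
have := congr1 (fun M => phiw n (winv w0) *m M *m phiw n w0) h.
rewrite !mulmxA phiw_winvL mul1mx -!mulmxA phiw_winvL ?mulmx1 ?mul1mx.
by [].
Qed.

Lemma fix_pw w0 k : fixes (evalD (w0 ++ pw k ++ winv w0)) (evalD w0 *m cusp_inf).
Proof.
apply/fixes_iff.
have -> : actW (winv w0 ++ (w0 ++ pw k ++ winv w0) ++ w0) (1, 1) = actW (pw k) (1,1).
  by rewrite !actW_cat !actW_winvL.
by rewrite pw_act /=; ring.
Qed.

Lemma phiw_conj n w0 k : phiw n (w0 ++ pw k ++ winv w0) =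
  phiw n w0 *m qH n ^+ k *m phiw n (winv w0).
Proof. by rewrite !phiw_cat phiw_pw mulmxA. Qed.

Lemma psiw_conj n w0 k : (1 < n)%N -> (n %| k)%N -> psiw n (w0 ++ pw k ++ winv w0) = (0, 0).
Proof.
move=> hn hk; rewrite !psiw_cat psiw_winv psiw_pw /=.
move: hk; rewrite -natZ0 // => /eqP ->.
by congr pair; rewrite ?oppr0 add0r addrN.
Qed.

Theorem mainTheorem6' (n : nat) (hn : (2 <= n)%N) (heven : ~~ odd n) :
  forall w0 : word,
    ram_C_F n (evalD w0 *m cusp_inf) 2 /\
    ram_C_P1 n (evalD w0 *m cusp_inf) (2 * n).
Proof.
move=> w0.
have hn1 : (1 < n)%N by [].
have hn0 : (0 < n)%N by lia.
have h2n : (0 < 2 * n)%N by lia.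
split.
- pose f := fun t : 'I_2 => phiw n w0 *m qH n ^+ (t * n) *m phiw n (winv w0).
  exists (f @: [set: 'I_2]); split.
  + move=> x; split.
    * case/imsetP => t _ ->; exists (w0 ++ pw (t * n) ++ winv w0).
      split; first exact: fix_pw.
      split; first by apply: psiw_conj => //; apply: dvdn_mull.
      by rewrite phiw_conj.
    * case=> w [hf [hp <-]].
      have [k [hk hd]] := char_fix hn1 hf.
      have hdk := hd hp.
      apply/imsetP; exists (Ordinal (ltn_pmod (k %/ n) (isT : (0 < 2)%N))); first by rewrite in_setT.
      rewrite hk /f /=.
      congr (_ *m _ *m _).
      rewrite -(expr_mod _ (qH_2n hn1)); congr (_ ^+ _).
      by rewrite muln_modl (divnK hdk).
  + rewrite card_imset ?cardsT ?card_ord //.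
    move=> t1 t2 /conj_inj E.
    have := qH_inj hn1 heven _ _ E.
    have ht1 := ltn_ord t1; have ht2 := ltn_ord t2.
    move=> h; apply/val_inj => /=.
    have : (t1 * n = t2 * n)%N by apply: h; nia.
    by move/eqP; rewrite eqn_pmul2r // => /eqP.
- pose f := fun t : 'I_(2 * n) => phiw n w0 *m qH n ^+ t *m phiw n (winv w0).
  exists (f @: [set: 'I_(2 * n)]); split.
  + move=> x; split.
    * case/imsetP => t _ ->; exists (w0 ++ pw t ++ winv w0).
      split; first exact: fix_pw.
      by rewrite phiw_conj.
    * case=> w [hf <-].
      have [k [hk _]] := char_fix hn1 hf.
      apply/imsetP; exists (Ordinal (ltn_pmod k h2n)); first by rewrite in_setT.
      rewrite hk /f /=.
      congr (_ *m _ *m _).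
      by rewrite -(expr_mod _ (qH_2n hn1)).
  + rewrite card_imset ?cardsT ?card_ord //.
    move=> t1 t2 /conj_inj E.
    apply/val_inj; exact: (qH_inj hn1 heven (ltn_ord t1) (ltn_ord t2) E).
Qed.

Unset Implicit Arguments. Set Strict Implicit.

Theorem mainTheorem6 (n : nat) (hn : (2 <= n)%N) (heven : ~~ odd n) :
  forall w0 : word,
    ram_C_F n (evalD w0 *m cusp_inf) 2 /\
    ram_C_P1 n (evalD w0 *m cusp_inf) (2 * n).
Proof. exact: mainTheorem6'. Qed.
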